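(* Let $X$ be a locally compact, completely regular Hausdorff ($T_{3\frac12}$) space, let $\hat X$ be any compactification of $X$, and let $a\subseteq X$. Then every end $e$ of $a$ has non-empty connected boundary $\partial e$.
   Context: An end of a subset $a\subseteq X$ is a function $e$ from the family of compact subsets of $X$ to subsets of $a$ such that: - for each compact $K\subseteq X$, $e(K)$ is a connected component of $a\setminus K$; - $e(K)\supseteq e(K')$ whenever $K\subseteq K'$ are compact. For $b\subseteq X$, its boundary is $\partial b=\overline{b}^{\hat X}\setminus X$, the closure of $b$ taken in $\hat X$, minus $X$. The boundary of the end $e$ is $\partial e=\bigcap_{K\subseteq X\text{ compact}}\partial e(K)$. *)

(* Defs.v *)
From HB Require Import structures.
From mathcomp Require Import all_boot all_order all_algebra.
From mathcomp Require Import all_classical all_reals all_analysis.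
Set Implicit Arguments. Unset Strict Implicit. Unset Printing Implicit Defensive.
Import Order.TTheory GRing.Theory Num.Theory.
Local Open Scope classical_set_scope.

Definition embedding (X Y : topologicalType) (f : X -> Y) : Prop :=
  [/\ continuous f, injective f &
      forall U : set X, open U ->
        exists V : set Y, open V /\ f @` U = V `&` range f].

Definition compactification (X Y : topologicalType) (f : X -> Y) : Prop :=
  [/\ compact [set: Y], hausdorff_space Y, embedding f & dense (range f)].

Definition is_end (X : topologicalType) (a : set X) (e : set X -> set X) : Prop :=
  (forall K : set X, compact K ->
     e K `<=` a /\
     exists2 x, (a `\` K) x & e K = connected_component (a `\` K) x) /\
  (forall K K' : set X, compact K -> compact K' -> K `<=` K' -> e K' `<=` e K).

Definition bdry (X Y : topologicalType) (f : X -> Y) (b : set X) : set Y :=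
  closure (f @` b) `\` range f.

Definition end_bdry (X Y : topologicalType) (f : X -> Y) (e : set X -> set X)
  : set Y :=
  \bigcap_(K in [set K : set X | compact K]) bdry f (e K).

(* Main.v *)
Require Import Defs.
From HB Require Import structures.
From mathcomp Require Import all_boot all_order all_algebra.
From mathcomp Require Import all_classical all_reals all_analysis.
From mathcomp Require Import Rstruct.
Local Open Scope classical_set_scope.

Lemma key_fip (Y : topologicalType) (I : Type) (D : set I) (C : I -> set Y) :
  compact [set: Y] -> (forall i, D i -> closed (C i)) -> D !=set0 ->
  (forall i j, D i -> D j -> exists2 k, D k & C k `<=` C i `&` C j) ->
  (forall i, D i -> C i !=set0) -> \bigcap_(i in D) C i !=set0.
Proof.
move=> cY clC [i0 Di0] dir ne.
have FF := filter_from_filter (ex_intro _ i0 Di0) dir.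
have PF := filter_from_proper FF ne.
have [y [_ cly]] := cY _ PF (filterT).
exists y => i Di; rewrite clusterE in cly.
have := cly (C i) (ex_intro2 _ _ i Di (@subset_refl _ _)).
by rewrite -(closure_id _).1 //; exact: clC.
Qed.

Theorem mainTheorem7 (X Y : topologicalType) (f : X -> Y)
  (a : set X) (e : set X -> set X) :
  locally_compact [set: X] ->
  completely_regular_space X ->
  hausdorff_space X ->
  compactification f ->
  is_end a e ->
  end_bdry f e !=set0 /\ connected (end_bdry f e).
Proof.
move=> lcX _ hX [cY hY [cf injf embf] _] [endK endmono].
pose D := [set K : set X | compact K].
pose C K := closure (f @` e K).
have eP K : compact K -> [/\ e K `<=` a `\` K, e K !=set0 & connected (e K)].
  move=> cK; have [_ [x Ax ->]] := endK K cK; split.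
  - exact: connected_component_sub.
  - by exists x; exact: connected_component_refl.
  - exact: component_connected.
have notin x : exists2 K, compact K & ~ C K (f x).
  have [U] := lcX x I; rewrite withinET => nU [cU _].
  exists U => //; move: nU; rewrite nbhsE.
  move=> [ Ox1 [oO Ox] OU].
  have [V [oV eV]] := embf Ox1 oO.
  have Vfx : V (f x).
    have : (f @` Ox1) (f x) by exists x.
    by rewrite eV => -[].
  move=> /(_ V (open_nbhs_nbhs (conj oV Vfx))) [_ [[z ez <-] Vfz]].
  have : (V `&` range f) (f z) by split => //; exists z.
  rewrite -eV => -[w Ow /injf wz]; subst w.
  by have [/(_ z ez) [_ /(_ (OU z Ow))]] := eP U cU.
have dir K1 K2 : D K1 -> D K2 -> exists2 K, D K & C K `<=` C K1 `&` C K2.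
  move=> c1 c2; exists (K1 `|` K2); first exact: compactU.
  have cU : compact (K1 `|` K2) by exact: compactU.
  move=> y Cy; split.
    by apply: (closureS (image_subset f (endmono _ _ c1 cU (@subsetUl _ K1 K2)))) Cy.
  by apply: (closureS (image_subset f (endmono _ _ c2 cU (@subsetUr _ K1 K2)))) Cy.
have neC K : D K -> C K !=set0.
  move=> cK; have [_ [x ex] _] := eP K cK.
  by exists (f x); apply: subset_closure; exists x.
have clC K : D K -> closed (C K) by move=> _; exact: closed_closure.
have D0 : D !=set0 by exists set0; exact: compact0.
have bE : end_bdry f e = \bigcap_(K in D) C K.
  apply/seteqP; split => y Hy K DK; first by have [] := Hy K DK.
  split; first exact: Hy.
  by move=> [x _ fxy]; subst y; have [K' cK' nK'] := notin x; apply: nK'; exact: Hy.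
rewrite bE; split; first exact: key_fip.
set B := \bigcap_(K in D) C K.
have clB : closed B by apply: closed_bigI.
apply/connectedP => E [E0 BE [s1 s2]].
have clE b : closed (E b).
  have sub : E b `<=` B by rewrite BE; case: b; [exact: subsetUr|exact: subsetUl].
  move=> y cy; have By : B y by apply: clB; exact: (closureS sub).
  case: b sub cy => sub cy; move: By; rewrite BE => -[h|h] //.
    by have : (E false `&` closure (E true)) y by []; rewrite s2.
  by have : (closure (E false) `&` E true) y by []; rewrite s1.
have [U [V [oU oV EU EV UV]]] :
    exists U V, [/\ open U, open V, E false `<=` U, E true `<=` V & U `&` V = set0].
  apply: (@normal_openP Rdefinitions.R Y).1 => //.
  - exact: compact_normal.
  - apply/seteqP; split => // y [y0 y1].
    have : (closure (E false) `&` E true) y.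
      by split => //; exact: subset_closure.
    by rewrite s1.
have [K DK CKW] : exists2 K, D K & C K `<=` U `|` V.
  apply: contrapT => H.
  pose W := ~` (U `|` V).
  have [y Hy] : \bigcap_(K in D) (C K `&` W) !=set0.
    apply: key_fip => //.
    - move=> K _; apply: closedI; first exact: closed_closure.
      exact/open_closedC/openU.
    - move=> K1 K2 c1 c2; have [K DK sK] := dir K1 K2 c1 c2.
      by exists K => // y [/sK [h1 h2] hw].
    - move=> K DK; apply: contrapT => /set0P/negP; rewrite negbK => /eqP h0.
      apply: H; exists K => // y Cy; apply: contrapT => nUV.
      by have : (C K `&` W) y by []; rewrite h0.
  have By : B y by move=> K DK; have [] := Hy K DK.
  have [K0 DK0] := D0; have [_ Wy] := Hy K0 DK0.
  by apply: Wy; move: By; rewrite BE => -[/EU|/EV]; [left|right].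
have conC : connected (C K).
  apply: connected_closure; apply: connected_continuous_connected.
    by have [] := eP K DK.
  exact: continuous_subspaceT.
have sepUV : separated U V.
  split; apply/seteqP; split => // y [].
    move=> cU Vy; have [z [Uz Vz]] := cU V (open_nbhs_nbhs (conj oV Vy)).
    by have : (U `&` V) z by []; rewrite UV.
  move=> Uy cV; have [z [Vz Uz]] := cV U (open_nbhs_nbhs (conj oU Uy)).
  by have : (U `&` V) z by []; rewrite UV.
have BC : B `<=` C K by move=> y By; exact: By.
have [CU|CV] := connected_subset sepUV CKW conC.
  have [y Ey] := E0 true.
  have : (U `&` V) y.
    by split; [apply: CU; apply: BC; rewrite BE; right|exact: EV].
  by rewrite UV.
have [y Ey] := E0 false.
have : (U `&` V) y.
  by split; [exact: EU|apply: CV; apply: BC; rewrite BE; left].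
by rewrite UV.
Qed.
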